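(* Let $G$ be a finite abelian group and $G_0\subseteq G$. Then $c_{\mathrm{gr}}(\mathcal{B}(G_0))\le2\,\mathsf{d}(G_0)+2\le2\,\mathsf{D}(G)\le2|G|$.
   Context: $G$ is written multiplicatively. $\mathcal{B}(G_0)=\{\alpha\in\mathbb{N}_0^{G_0}\mid\prod_{g\in G_0}g^{\alpha(g)}=1\}$, graded by $|\alpha|=\sum_g\alpha(g)$; it is a connected graded reduced affine monoid with finite atom set $\mathcal{A}(\mathcal{B}(G_0))$. Graded catenary degree: for $\alpha,\gamma\in\mathbb{N}_0^{\mathcal{A}}$ ($\mathcal{A}=\mathcal{A}(\mathcal{B}(G_0))$) let $a^{\alpha}=\sum_a\alpha(a)a$, $|\alpha|_{\mathrm{gr}}=\sum_a\alpha(a)|a|$, $\gcd(\alpha,\gamma)(a)=\min\{\alpha(a),\gamma(a)\}$, $d_{\mathrm{gr}}(\alpha,\gamma)=\max\{|\alpha-\gcd|_{\mathrm{gr}},|\gamma-\gcd|_{\mathrm{gr}}\}$; $c_{\mathrm{gr}}$ is the minimal $d$ such that whenever $a^{\alpha}=a^{\gamma}$ there is a chain $\alpha=\alpha^{(0)},\dots,\alpha^{(k)}=\gamma$ with $a^{\alpha^{(j)}}=a^{\alpha^{(j+1)}}$ and $d_{\mathrm{gr}}(\alpha^{(j)},\alpha^{(j+1)})\le d$. $\mathsf{d}(G_0)$ is the maximal length of a sequence over $G_0$ containing no nonempty product-one subsequence (equivalently the maximal $|\alpha|$, $\alpha\in\mathbb{N}_0^{G_0}$, with no atom $\gamma$ of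 $\mathcal{B}(G_0)$ satisfying $\gamma\le\alpha$ pointwise). $\mathsf{D}(G)=\max\{|\alpha|:\alpha\in\mathcal{A}(\mathcal{B}(G))\}$ is the Davenport constant. *)

(* Defs.v *)
From mathcomp Require Import all_boot all_fingroup.
Set Implicit Arguments. Unset Strict Implicit. Unset Printing Implicit Defensive.

Section Defs.
Variable gT : finGroupType.

(* A sequence over gT as a multiplicity function alpha : gT -> N_0. *)
Definition seqT := {ffun gT -> nat}.

Definition gsize (a : seqT) : nat := \sum_(g : gT) a g.

Definition over (G0 : {set gT}) (a : seqT) : Prop := forall g, g \notin G0 -> a g = 0.

(* product of alpha: prod_g g^(alpha g) (the group is abelian on the support) *)
Definition seqprod (a : seqT) : gT := (\prod_(g : gT) g ^+ a g)%g.

Definition inB (G0 : {set gT}) (a : seqT) : Prop := over G0 a /\ seqprod a = 1%g.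

Definition seq_le (b a : seqT) : Prop := forall g, b g <= a g.
Definition is_zero (a : seqT) : Prop := forall g, a g = 0.

Definition atomB (G0 : {set gT}) (a : seqT) : Prop :=
  inB G0 a /\ ~ is_zero a /\
  forall b c : seqT, inB G0 b -> inB G0 c -> (forall g, a g = b g + c g) ->
    is_zero b \/ is_zero c.

(* a factorization of alpha: a finite multiset of atoms (a seq) summing to alpha *)
Definition factorization (G0 : {set gT}) (a : seqT) (z : seq seqT) : Prop :=
  (forall x, x \in z -> atomB G0 x) /\ (forall g, a g = \sum_(x <- z) x g).

(* |z - gcd(z,z')|_gr *)
Definition rem_len (z z' : seq seqT) : nat :=
  \sum_(x <- undup z) (count_mem x z - count_mem x z') * gsize x.

Definition d_gr (z z' : seq seqT) : nat := maxn (rem_len z z') (rem_len z' z).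

Definition gr_catenary (G0 : {set gT}) (d : nat) : Prop :=
  forall (a : seqT) (z z' : seq seqT),
    factorization G0 a z -> factorization G0 a z' ->
    exists (k : nat) (w : nat -> seq seqT),
      [/\ w 0 = z, w k = z',
          (forall j, j <= k -> factorization G0 a (w j)) &
          (forall j, j < k -> d_gr (w j) (w j.+1) <= d)].

Definition is_cgr (G0 : {set gT}) (c : nat) : Prop :=
  gr_catenary G0 c /\ forall d, gr_catenary G0 d -> c <= d.

Definition zs_free (G0 : {set gT}) (a : seqT) : Prop :=
  over G0 a /\ forall b : seqT, seq_le b a -> seqprod b = 1%g -> is_zero b.

Definition is_small_d (G0 : {set gT}) (n : nat) : Prop :=
  (exists a, zs_free G0 a /\ gsize a = n) /\
  (forall a, zs_free G0 a -> gsize a <= n).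

Definition is_davenport (G : {set gT}) (n : nat) : Prop :=
  (exists a, atomB G a /\ gsize a = n) /\
  (forall a, atomB G a -> gsize a <= n).

End Defs.

(* Main.v *)
Require Import Defs.
From mathcomp Require Import all_boot all_fingroup.
From mathcomp Require Import zify.
From Stdlib Require Import Classical.
Set Implicit Arguments. Unset Strict Implicit. Unset Printing Implicit Defensive.

Ltac ffgen := repeat match goal with
 | |- context [@fun_of_fin ?a ?b ?p ?f ?x] => let t := fresh "t" in move: (@fun_of_fin a b p f x) => t
 end.
Ltac flia := ffgen; lia.

Section Ops.
Variable gT : finGroupType.
Implicit Types a b c x y : seqT gT.

Definition addS a b : seqT gT := [ffun g => a g + b g].
Definition subS a b : seqT gT := [ffun g => a g - b g].
Definition unitS (x : gT) : seqT gT := [ffun g => nat_of_bool (g == x)].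
Definition zeroS : seqT gT := [ffun _ => 0].
Definition sumL (z : seq (seqT gT)) : seqT gT := [ffun g => \sum_(x <- z) x g].

Lemma gsize_add a b : gsize (addS a b) = gsize a + gsize b.
Proof. by rewrite /gsize -big_split /=; apply: eq_bigr => g _; rewrite ffunE. Qed.

Lemma sub_addK a b : seq_le b a -> addS b (subS a b) = a.
Proof. by move=> H; apply/ffunP => g; rewrite !ffunE subnKC. Qed.

Lemma gsize_sub a b : seq_le b a -> gsize (subS a b) = gsize a - gsize b.
Proof. by move=> H; have := gsize_add b (subS a b); rewrite sub_addK // => ->; rewrite addKn. Qed.

Lemma gsize_le a b : seq_le b a -> gsize b <= gsize a.
Proof. by move=> H; apply: leq_sum => g _. Qed.

Lemma gsize0P a : gsize a = 0 <-> is_zero a.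
Proof.
split.
- move=> H g; apply/eqP; move: H => /eqP; rewrite /gsize sum_nat_eq0 => /forallP H.
  by have := H g.
- by move=> H; rewrite /gsize big1.
Qed.

Lemma gsize_unit (u : gT) : gsize (unitS u) = 1.
Proof.
rewrite /gsize (bigD1 u) //= big1 ?ffunE ?eqxx // => g /negbTE Hg.
by rewrite ffunE Hg.
Qed.

Lemma gsize_zero : gsize zeroS = 0.
Proof. by rewrite /gsize big1 // => g _; rewrite ffunE. Qed.

Lemma not_zero_pos a : ~ is_zero a -> 0 < gsize a.
Proof. by move=> H; rewrite lt0n; apply/eqP => /gsize0P. Qed.

Lemma not_zero_ex a : ~ is_zero a -> exists g, 0 < a g.
Proof.
move=> H; apply: NNPP => Hn; apply: H => g.
by apply/eqP; rewrite -leqn0 leqNgt; apply/negP => Hg; apply: Hn; exists g.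
Qed.

Lemma seqprod_unit (u : gT) : seqprod (unitS u) = u.
Proof.
rewrite /seqprod (eq_bigr (fun g => if g == u then g else 1%g)).
  by rewrite -big_mkcond big_pred1_eq.
by move=> g _; rewrite ffunE; case: eqP.
Qed.

Lemma seqprod_zero : seqprod zeroS = 1%g.
Proof. by rewrite /seqprod big1 // => g _; rewrite ffunE. Qed.

Lemma sumL_cons x z : sumL (x :: z) = addS x (sumL z).
Proof. by apply/ffunP => g; rewrite !ffunE big_cons. Qed.

Lemma sumL_nil : sumL [::] = zeroS.
Proof. by apply/ffunP => g; rewrite !ffunE big_nil. Qed.

Lemma sumL_perm z z' : perm_eq z z' -> sumL z = sumL z'.
Proof. by move=> H; apply/ffunP => g; rewrite !ffunE (perm_big _ H). Qed.

Lemma gsize_sumL z : gsize (sumL z) = \sum_(x <- z) gsize x.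
Proof.
elim: z => [|x z IH]; first by rewrite sumL_nil gsize_zero big_nil.
by rewrite sumL_cons gsize_add IH big_cons.
Qed.

End Ops.

Section Grp.
Variables (gT : finGroupType) (G : {group gT}).
Hypothesis abG : abelian G.
Implicit Types a b c x y : seqT gT.

Lemma comm_in u v : u \in G -> v \in G -> commute u v.
Proof. by move=> Hx Hy; apply: (centsP abG). Qed.

Lemma prod_split (I : Type) (r : seq I) (F1 F2 : I -> gT) :
  (forall i, F1 i \in G) -> (forall i, F2 i \in G) ->
  (\prod_(i <- r) (F1 i * F2 i) = (\prod_(i <- r) F1 i) * \prod_(i <- r) F2 i)%g.
Proof.
move=> H1 H2; elim: r => [|x r IH]; first by rewrite !big_nil mulg1.
rewrite !big_cons IH.
have HP : (\prod_(i <- r) F1 i)%g \in G by apply: group_prod.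
by rewrite -!mulgA; congr (_ * _)%g; rewrite !mulgA (comm_in (H2 x) HP).
Qed.

Lemma pow_in a g : Defs.over G a -> (g ^+ a g)%g \in G.
Proof.
move=> H; case: (boolP (g \in G)) => Hg; first exact: groupX.
by rewrite H // expg0 group1.
Qed.

Lemma seqprod_in a : Defs.over G a -> seqprod a \in G.
Proof. by move=> H; apply: group_prod => g _; apply: pow_in. Qed.

Lemma seqprod_add a b : Defs.over G a -> Defs.over G b ->
  seqprod (addS a b) = (seqprod a * seqprod b)%g.
Proof.
move=> Ha Hb; rewrite /seqprod -prod_split; last 2 first.
- by move=> g; apply: pow_in.
- by move=> g; apply: pow_in.
by apply: eq_bigr => g _; rewrite ffunE expgD.
Qed.

End Grp.

Section B.
Variables (gT : finGroupType) (G : {group gT}) (G0 : {set gT}).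
Hypothesis abG : abelian G.
Hypothesis sG0 : G0 \subset G.
Implicit Types a b c x y : seqT gT.

Lemma overG a : Defs.over G0 a -> Defs.over G a.
Proof. by move=> H g Hg; apply: H; apply: contra Hg; apply: (subsetP sG0). Qed.

Lemma over_le a b : seq_le b a -> Defs.over G0 a -> Defs.over G0 b.
Proof. by move=> Hle H g Hg; apply/eqP; rewrite -leqn0 -(H g Hg) Hle. Qed.

Lemma inB_add a b : inB G0 a -> inB G0 b -> inB G0 (addS a b).
Proof.
move=> [Ha Pa] [Hb Pb]; split.
  by move=> g Hg; rewrite ffunE Ha ?Hb.
by rewrite (seqprod_add abG (overG Ha) (overG Hb)) Pa Pb mulg1.
Qed.

Lemma inB_sub a b : inB G0 a -> seq_le b a -> inB G0 b -> inB G0 (subS a b).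
Proof.
move=> [Ha Pa] Hle [Hb Pb]; split.
  by move=> g Hg; rewrite ffunE Ha.
have Ho : Defs.over G0 (subS a b) by move=> g Hg; rewrite ffunE Ha.
have := seqprod_add abG (overG Hb) (overG Ho).
by rewrite sub_addK // Pa Pb mul1g.
Qed.

Lemma seq_le_refl a : seq_le a a.
Proof. by move=> g. Qed.

Lemma seq_le_trans a b c : seq_le a b -> seq_le b c -> seq_le a c.
Proof. by move=> H1 H2 g; apply: leq_trans (H1 g) (H2 g). Qed.

Lemma contains_atom b : inB G0 b -> ~ is_zero b ->
  exists t, atomB G0 t /\ seq_le t b.
Proof.
have [n Hn] := ubnP (gsize b); elim: n b Hn => // n IH b Hn HB Hz.
case: (classic (atomB G0 b)) => Ha; first by exists b; split => //; apply: seq_le_refl.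
have : ~ (forall c e : seqT gT, inB G0 c -> inB G0 e -> (forall g, b g = c g + e g) ->
    is_zero c \/ is_zero e) by move=> H; apply: Ha; split => //; split.
move=> /not_all_ex_not [c /not_all_ex_not [e H]].
have [Hc [He [Hs Hnz]]] : inB G0 c /\ inB G0 e /\ (forall g, b g = c g + e g) /\
   ~ (is_zero c \/ is_zero e) by tauto.
have Hbc : b = addS c e by apply/ffunP => g; rewrite ffunE Hs.
have Hcz : ~ is_zero c by tauto.
have Hez : ~ is_zero e by tauto.
have Hlt : gsize c < n.
  have := not_zero_pos Hez; move: Hn; rewrite Hbc gsize_add; lia.
have [t [Ht Hle]] := IH c Hlt Hc Hcz.
exists t; split => //; apply: seq_le_trans Hle _ => g; rewrite Hs; exact: leq_addr.
Qed.

End B.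

Section C.
Variables (gT : finGroupType) (G : {group gT}) (G0 : {set gT}).
Hypothesis abG : abelian G.
Hypothesis sG0 : G0 \subset G.
Implicit Types a b c x y : seqT gT.

Lemma inB_zero : inB G0 (zeroS gT).
Proof. by split; [move=> g _; rewrite ffunE | apply: seqprod_zero]. Qed.

Lemma factE b z : factorization G0 b z <-> 
  (forall x, x \in z -> atomB G0 x) /\ b = sumL z.
Proof.
split => [[H1 H2] | [H1 H2]]; split => //.
  by apply/ffunP => g; rewrite ffunE H2.
by move=> g; rewrite H2 ffunE.
Qed.

Lemma fact_inB z : (forall x, x \in z -> atomB G0 x) -> inB G0 (sumL z).
Proof.
elim: z => [|x z IH] H; first by rewrite sumL_nil; apply: inB_zero.
rewrite sumL_cons; apply: (inB_add abG sG0).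
  by have [] := H x (mem_head _ _).
by apply: IH => y Hy; apply: H; rewrite inE Hy orbT.
Qed.

Lemma atom_le_sumL x z : x \in z -> seq_le x (sumL z).
Proof.
move=> Hx g; rewrite ffunE (big_rem x Hx) /=; exact: leq_addr.
Qed.

Lemma atom_nz x : atomB G0 x -> ~ is_zero x.
Proof. by case=> _ []. Qed.

Lemma fact_exists b : inB G0 b -> exists z, factorization G0 b z.
Proof.
have [n Hn] := ubnP (gsize b); elim: n b Hn => // n IH b Hn HB.
case: (classic (is_zero b)) => Hz.
  exists [::]; split => // g; by rewrite big_nil Hz.
have [t [Ht Hle]] := contains_atom abG sG0 HB Hz.
have HB' := inB_sub abG sG0 HB Hle (proj1 Ht).
have Hlt : gsize (subS b t) < n.
  have := not_zero_pos (atom_nz Ht); move: Hn; rewrite (gsize_sub Hle).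
  have := gsize_le Hle; lia.
have [z /factE [Hz1 Hz2]] := IH _ Hlt HB'.
exists (t :: z); apply/factE; split.
  by move=> x; rewrite inE => /orP [/eqP -> | /Hz1].
by rewrite sumL_cons -Hz2 sub_addK.
Qed.

Lemma sub_zs_free a b : seq_le b a -> zs_free G0 a -> zs_free G0 b.
Proof.
move=> Hle [Ho H]; split; first exact: over_le Ho.
by move=> c Hc; apply: H; apply: seq_le_trans Hc Hle.
Qed.

Lemma atom_minus x g : atomB G0 x -> 0 < x g -> zs_free G0 (subS x (unitS g)).
Proof.
move=> [[Hxo Hxp] [Hxz Hat]] Hg.
have Hle1 : seq_le (subS x (unitS g)) x by move=> h; rewrite ffunE leq_subr.
split; first exact: over_le Hle1 Hxo.
move=> b Hb Pb; apply: NNPP => Hbz.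
have Hbx : seq_le b x := seq_le_trans Hb Hle1.
have Hbo : Defs.over G0 b := over_le Hbx Hxo.
have HbB : inB G0 b by [].
have HcB := inB_sub abG sG0 (conj Hxo Hxp) Hbx HbB.
have [] := Hat b (subS x b) HbB HcB.
- by move=> h; rewrite ffunE subnKC.
- by [].
- move=> Hc; move: (Hc g) (Hb g); rewrite !ffunE eqxx; lia.
Qed.

Section D.
Variable dd : nat.
Hypothesis Hd : is_small_d G0 dd.

Lemma big_has_atom A : Defs.over G0 A -> dd < gsize A ->
  exists t, atomB G0 t /\ seq_le t A.
Proof.
move=> Ho Hs.
have Hnf : ~ zs_free G0 A by move=> Hf; have := proj2 Hd A Hf; lia.
have : ~ forall b, seq_le b A -> seqprod b = 1%g -> is_zero b by move=> H; apply: Hnf.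
move=> /not_all_ex_not [b Hb].
have [Hle [Pb Hbz]] : seq_le b A /\ seqprod b = 1%g /\ ~ is_zero b by tauto.
have [t [Ht Htb]] := contains_atom abG sG0 (conj (over_le Hle Ho) Pb) Hbz.
by exists t; split => //; apply: seq_le_trans Htb Hle.
Qed.

Lemma atom_size x : atomB G0 x -> gsize x <= dd.+1.
Proof.
move=> Hx; have [g Hg] := not_zero_ex (atom_nz Hx).
have Hf := atom_minus Hx Hg.
have Hle : seq_le (unitS g) x by move=> h; rewrite ffunE; case: eqP => // ->.
have := proj2 Hd _ Hf; rewrite (gsize_sub Hle) gsize_unit.
have := not_zero_pos (atom_nz Hx); lia.
Qed.

End D.
End C.

Section Rem.
Variable gT : finGroupType.
Implicit Types z p q s : seq (seqT gT).

Lemma rem_len_gen s z z' : uniq s -> {subset z <= s} ->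
  rem_len z z' = \sum_(x <- s) (count_mem x z - count_mem x z') * gsize x.
Proof.
move=> Us Hsub.
rewrite (bigID (fun x => x \in z)) /= [X in _ = _ + X]big1 ?addn0; last first.
  by move=> x /count_memPn ->.
rewrite -big_filter /rem_len; apply: perm_big.
apply: uniq_perm; [exact: undup_uniq | exact: filter_uniq |].
move=> x; rewrite mem_undup mem_filter; case Hx: (x \in z) => //=.
by rewrite Hsub.
Qed.

Lemma rem_len_cons x p q : rem_len (x :: p) (x :: q) = rem_len p q.
Proof.
have U := undup_uniq (x :: p).
rewrite (@rem_len_gen (undup (x :: p)) (x :: p) (x :: q) U); last first.
  by move=> y; rewrite mem_undup.
rewrite (@rem_len_gen (undup (x :: p)) p q U); last first.
  by move=> y Hy; rewrite mem_undup inE Hy orbT.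
by apply: eq_bigr => y _ /=; rewrite subnDl.
Qed.

Lemma d_gr_cons x p q : d_gr (x :: p) (x :: q) = d_gr p q.
Proof. by rewrite /d_gr !rem_len_cons. Qed.

Lemma rem_len_perm z z' : perm_eq z z' -> rem_len z z' = 0.
Proof.
move=> /seq.permP H; rewrite /rem_len big1 // => x _; by rewrite H subnn.
Qed.

Lemma d_gr_perm z z' : perm_eq z z' -> d_gr z z' = 0.
Proof.
by move=> H; rewrite /d_gr rem_len_perm // rem_len_perm // perm_sym.
Qed.

Lemma rem_len_le z z' : rem_len z z' <= \sum_(x <- z) gsize x.
Proof.
rewrite -big_undup_iterop_count; apply: leq_sum => x _.
rewrite Monoid.iteropE iter_addn_0 mulnC; apply: leq_mul => //; exact: leq_subr.
Qed.

Lemma d_gr_le z z' : \sum_(x <- z) gsize x = \sum_(x <- z') gsize x ->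
  d_gr z z' <= \sum_(x <- z) gsize x.
Proof.
by move=> H; rewrite /d_gr geq_max rem_len_le H rem_len_le.
Qed.

End Rem.

Section Split.
Variable gT : finGroupType.
Implicit Types a b c x y : seqT gT.

Lemma sub_of_size (W : seqT gT) n : n <= gsize W -> exists V : seqT gT, seq_le V W /\ gsize V = n.
Proof.
elim: n => [|n IH] Hn.
  by exists (zeroS gT); split; [move=> g; rewrite ffunE | apply: gsize_zero].
have [V [HV HVs]] := IH (ltnW Hn).
have [g Hg] : exists g, V g < W g.
  apply: NNPP => Hne.
  have Heq : forall g, V g = W g.
    move=> g; apply/eqP; rewrite eqn_leq HV /= leqNgt; apply/negP => H.
    by apply: Hne; exists g.
  have : gsize V = gsize W by apply: eq_bigr => g _; rewrite Heq.
  lia.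
exists (addS V (unitS g)); split.
  move=> h; rewrite !ffunE; case: eqP => [->|_]; last by rewrite addn0 HV.
  by rewrite addn1.
by rewrite gsize_add gsize_unit HVs addn1.
Qed.

Lemma split_two (W : seqT gT) n1 n2 : n1 <= gsize W -> n2 <= gsize W ->
  exists W1 W2 : seqT gT, [/\ seq_le W1 W, seq_le W2 W, gsize W1 = n1, gsize W2 = n2 &
     gsize ([ffun g => W1 g + W2 g - W g] : seqT gT) <= n1 + n2 - gsize W].
Proof.
move=> H1 H2.
have [V1 [HV1 HV1s]] := sub_of_size H1.
have HWs : gsize (subS W V1) = gsize W - n1 by rewrite gsize_sub // HV1s.
case: (leqP n2 (gsize W - n1)) => Hc.
  have Hc' : n2 <= gsize (subS W V1) by rewrite HWs.
  have [V2 [HV2 HV2s]] := sub_of_size Hc'.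
  exists V1, V2; split => //.
  - by move=> g; apply: leq_trans (HV2 g) _; rewrite ffunE leq_subr.
  - have -> : ([ffun g => V1 g + V2 g - W g] : seqT gT) = zeroS gT.
      apply/ffunP => g; rewrite !ffunE; have := HV2 g; rewrite ffunE.
      have := HV1 g; lia.
    by rewrite gsize_zero.
have HE : n2 - (gsize W - n1) <= gsize V1 by rewrite HV1s; lia.
have [E [HE1 HEs]] := sub_of_size HE.
exists V1, (addS (subS W V1) E); split => //.
- move=> g; rewrite !ffunE; have := HE1 g; have := HV1 g; lia.
- rewrite gsize_add HWs HEs; move: Hc H1 H2; lia.
- have -> : ([ffun g => V1 g + addS (subS W V1) E g - W g] : seqT gT) = E.
    apply/ffunP => g; rewrite !ffunE; have := HE1 g; have := HV1 g; flia.
  by rewrite HEs; lia.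
Qed.

End Split.

Section Chain.
Variables (gT : finGroupType) (G0 : {set gT}) (N : nat).

Inductive chain (a : seqT gT) : seq (seqT gT) -> seq (seqT gT) -> Prop :=
| ch_refl z : factorization G0 a z -> chain a z z
| ch_step z y z' : factorization G0 a z -> d_gr z y <= N -> chain a y z' ->
    chain a z z'.

Lemma chain_trans a z y w : chain a z y -> chain a y w -> chain a z w.
Proof.
elim=> [z0 _ //| z0 y0 z1 Hf Hd _ IH] Hw.
exact: ch_step Hf Hd (IH Hw).
Qed.

Lemma chain_factl a z z' : chain a z z' -> factorization G0 a z.
Proof. by case. Qed.

Lemma chain_factr a z z' : chain a z z' -> factorization G0 a z'.
Proof. by elim. Qed.

Lemma chain_ex a z z' : chain a z z' ->
  exists (k : nat) (w : nat -> seq (seqT gT)),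
      [/\ w 0 = z, w k = z',
          (forall j, j <= k -> factorization G0 a (w j)) &
          (forall j, j < k -> d_gr (w j) (w j.+1) <= N)].
Proof.
elim=> [z0 Hf | z0 y0 z1 Hf Hd Hc [k [w [H0 Hk Hfs Hds]]]].
  by exists 0, (fun _ => z0); split => // j _.
exists k.+1, (fun j => if j is j'.+1 then w j' else z0); split => //.
- by case=> [|j] //= Hj; apply: Hfs.
- by case=> [|j] /= Hj; [rewrite H0 | apply: Hds].
Qed.

Lemma fact_perm a z z' : factorization G0 a z -> perm_eq z z' ->
  factorization G0 a z'.
Proof.
move=> [H1 H2] Hp; split.
  by move=> x Hx; apply: H1; rewrite (perm_mem Hp).
by move=> g; rewrite H2 (perm_big _ Hp).
Qed.

Lemma chain_perm a z z' : factorization G0 a z -> perm_eq z z' -> chain a z z'.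
Proof.
move=> Hf Hp; apply: (ch_step Hf (y := z')); first by rewrite d_gr_perm.
by apply: ch_refl; apply: fact_perm Hp.
Qed.

Lemma fact_cons a x p : atomB G0 x -> seq_le x a ->
  factorization G0 (subS a x) p -> factorization G0 a (x :: p).
Proof.
move=> Hx Hle [H1 H2]; split.
  by move=> y; rewrite inE => /orP [/eqP -> | /H1].
by move=> g; rewrite big_cons -H2 ffunE subnKC.
Qed.

Lemma chain_lift a x p q : atomB G0 x -> seq_le x a ->
  chain (subS a x) p q -> chain a (x :: p) (x :: q).
Proof.
move=> Hx Hle; elim=> [z Hf | z y z' Hf Hd _ IH].
  by apply: ch_refl; apply: fact_cons.
by apply: (ch_step (y := x :: y)); [apply: fact_cons | rewrite d_gr_cons |].
Qed.

End Chain.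

Section Cat.
Variables (gT : finGroupType) (G : {group gT}) (G0 : {set gT}).
Hypothesis abG : abelian G.
Hypothesis sG0 : G0 \subset G.
Variable dd : nat.
Hypothesis Hd : is_small_d G0 dd.
Implicit Types a b c x y : seqT gT.

Let N := 2 * dd + 2.

Section Step.
Variable a : seqT gT.
Hypothesis HaB : inB G0 a.
Hypothesis IH : forall b, gsize b < gsize a -> forall z z',
  factorization G0 b z -> factorization G0 b z' -> chain G0 N b z z'.

Definition Rc x y := forall z z', factorization G0 a z -> x \in z ->
  factorization G0 a z' -> y \in z' -> chain G0 N a z z'.

Lemma fact_atom_le z x : factorization G0 a z -> x \in z -> atomB G0 x /\ seq_le x a.
Proof.
move=> /factE [H1 ->] Hx; split; [exact: H1 | exact: atom_le_sumL].
Qed.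

Lemma fact_rem z x : factorization G0 a z -> x \in z ->
  factorization G0 (subS a x) (rem x z).
Proof.
move=> Hf Hx; have Hp := perm_to_rem Hx.
have [H1 H2] := fact_perm Hf Hp.
split; first by move=> y Hy; apply: (proj1 Hf); apply: mem_rem Hy.
by move=> g; rewrite ffunE H2 big_cons addKn.
Qed.

Lemma Rc_refl x : Rc x x.
Proof.
move=> z z' Hf Hx Hf' Hx'.
have [Hat Hle] := fact_atom_le Hf Hx.
have Hlt : gsize (subS a x) < gsize a.
  rewrite gsize_sub //; have := not_zero_pos (atom_nz Hat); have := gsize_le Hle; lia.
have Hc := IH Hlt (fact_rem Hf Hx) (fact_rem Hf' Hx').
apply: (@chain_trans _ _ _ _ _ (x :: rem x z)).
  exact: chain_perm Hf (perm_to_rem Hx).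
apply: (@chain_trans _ _ _ _ _ (x :: rem x z')).
  exact: chain_lift Hat Hle Hc.
apply: chain_perm; last by rewrite perm_sym; apply: perm_to_rem.
by apply: fact_perm Hf' (perm_to_rem Hx').
Qed.

Lemma fact_with x y : atomB G0 x -> atomB G0 y -> seq_le (addS x y) a ->
  exists z, [/\ factorization G0 a z, x \in z & y \in z].
Proof.
move=> Hx Hy Hle.
have HxyB := inB_add abG sG0 (proj1 Hx) (proj1 Hy).
have [f Hf] := fact_exists abG sG0 (inB_sub abG sG0 HaB Hle HxyB).
exists (x :: y :: f); split; rewrite ?mem_head ?inE ?eqxx ?orbT //.
apply/factE; split.
  move=> w; rewrite !inE => /orP [/eqP -> //| /orP [/eqP -> //|]].
  by move: Hf => /factE [H _]; apply: H.
move: Hf => /factE [_ Hf]; rewrite !sumL_cons -Hf; apply/ffunP => g.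
rewrite !ffunE; have := Hle g; rewrite ffunE; flia.
Qed.

Lemma fact_with1 x : atomB G0 x -> seq_le x a -> exists z, factorization G0 a z /\ x \in z.
Proof.
move=> Hx Hle.
have [f Hf] := fact_exists abG sG0 (inB_sub abG sG0 HaB Hle (proj1 Hx)).
by exists (x :: f); split; [apply: fact_cons | rewrite mem_head].
Qed.

Lemma Rc_adj x y : atomB G0 x -> atomB G0 y -> seq_le (addS x y) a -> Rc x y.
Proof.
move=> Hx Hy Hle z z' Hf Hxz Hf' Hyz.
have [w [Hw Hxw Hyw]] := fact_with Hx Hy Hle.
exact: chain_trans (@Rc_refl x z w Hf Hxz Hw Hxw) (@Rc_refl y w z' Hw Hyw Hf' Hyz).
Qed.

Lemma Rc_trans x y w : atomB G0 y -> seq_le y a -> Rc x y -> Rc y w -> Rc x w.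
Proof.
move=> Hy Hle R1 R2 z z' Hf Hxz Hf' Hwz.
have [v [Hv Hyv]] := fact_with1 Hy Hle.
exact: chain_trans (R1 _ _ Hf Hxz Hv Hyv) (R2 _ _ Hv Hyv Hf' Hwz).
Qed.

Definition hh x y : seqT gT := [ffun g => x g + y g - a g].

Lemma hh_zero x x' : gsize (hh x x') = 0 -> seq_le (addS x x') a.
Proof.
move=> /gsize0P H g; have := H g; rewrite !ffunE; flia.
Qed.

Lemma connect_atoms : N < gsize a -> forall m x x', atomB G0 x -> atomB G0 x' ->
  seq_le x a -> seq_le x' a -> gsize (hh x x') <= m -> Rc x x'.
Proof.
move=> HN; elim=> [|m IHm] x x' Hx Hx' Hlx Hlx' Hm.
  by apply: Rc_adj => //; apply: hh_zero; move: Hm; rewrite leqn0 => /eqP.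
case: (posnP (gsize (hh x x'))) => Hh0.
  by apply: Rc_adj => //; apply: hh_zero.
set h := hh x x' in Hm Hh0.
pose P : seqT gT := [ffun g => x' g - h g].
pose P' : seqT gT := [ffun g => x g - h g].
pose W : seqT gT := [ffun g => (a g - x g) - P g].
have Ea : a = addS (addS (addS h P) P') W.
  apply/ffunP => g; rewrite !ffunE; have := Hlx g; have := Hlx' g; flia.
have Ex : x = addS h P'.
  apply/ffunP => g; rewrite !ffunE; have := Hlx g; have := Hlx' g; flia.
have Ex' : x' = addS h P.
  apply/ffunP => g; rewrite !ffunE; have := Hlx g; have := Hlx' g; flia.
have Esa : subS a x = addS P W.
  apply/ffunP => g; rewrite !ffunE; have := Hlx g; have := Hlx' g; flia.
have Esa' : subS a x' = addS P' W.
  apply/ffunP => g; rewrite !ffunE; have := Hlx g; have := Hlx' g; flia.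
have Sa : gsize a = gsize h + gsize P + gsize P' + gsize W by rewrite {1}Ea !gsize_add.
have Sx : gsize x = gsize h + gsize P' by rewrite {1}Ex gsize_add.
have Sx' : gsize x' = gsize h + gsize P by rewrite {1}Ex' gsize_add.
have Bx := atom_size abG sG0 Hd Hx.
have Bx' := atom_size abG sG0 Hd Hx'.
have HN' : 2 * dd + 2 < gsize a by [].
set n1 := dd.+1 - gsize P.
set n2 := dd.+1 - gsize P'.
have Hn1 : n1 <= gsize W by rewrite /n1; lia.
have Hn2 : n2 <= gsize W by rewrite /n2; lia.
have [W1 [W2 [HW1 HW2 SW1 SW2 SE]]] := split_two Hn1 Hn2.
pose A := addS P W1.
pose B := addS P' W2.
have HAa : seq_le A (subS a x).
  by move=> g; have := HW1 g; rewrite Esa !ffunE; flia.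
have HBa : seq_le B (subS a x').
  by move=> g; have := HW2 g; rewrite Esa' !ffunE; flia.
have Hsub : forall c, seq_le c a -> seq_le (subS a c) a.
  by move=> c _ g; rewrite ffunE leq_subr.
have HAo : Defs.over G0 A := over_le (seq_le_trans HAa (Hsub _ Hlx)) (proj1 HaB).
have HBo : Defs.over G0 B := over_le (seq_le_trans HBa (Hsub _ Hlx')) (proj1 HaB).
have SA : gsize A = dd.+1 by rewrite gsize_add SW1 /n1; lia.
have SB : gsize B = dd.+1 by rewrite gsize_add SW2 /n2; lia.
have [T [HT HTA]] := big_has_atom abG sG0 Hd HAo (ltac:(rewrite SA; lia)).
have [T' [HT' HTB]] := big_has_atom abG sG0 Hd HBo (ltac:(rewrite SB; lia)).
have HTa : seq_le (addS x T) a.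
  move=> g; have := HTA g; have := HAa g; have := Hlx g; rewrite !ffunE; flia.
have HT'a : seq_le (addS T' x') a.
  move=> g; have := HTB g; have := HBa g; have := Hlx' g; rewrite !ffunE; flia.
have HTle : seq_le T a.
  by move=> g; apply: leq_trans (HTa g) => //; rewrite ffunE leq_addl.
have HT'le : seq_le T' a.
  by move=> g; apply: leq_trans (HT'a g) => //; rewrite ffunE leq_addr.
have Hhh : seq_le (hh T T') [ffun g => W1 g + W2 g - W g].
  move=> g; have := HTA g; have := HTB g; have := Hlx g; have := Hlx' g.
  rewrite !ffunE; flia.
have HTT : Rc T T'.
  apply: IHm => //.
  have := gsize_le Hhh; move: SE; rewrite /n1 /n2; lia.
apply: (Rc_trans HT HTle (Rc_adj Hx HT HTa)).
exact: (Rc_trans HT' HT'le HTT (Rc_adj HT' Hx' HT'a)).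
Qed.

End Step.

Lemma cat_chain a : forall z z', factorization G0 a z -> factorization G0 a z' ->
  chain G0 N a z z'.
Proof.
have [n Hn] := ubnP (gsize a); elim: n a Hn => // n IHn a Hn z z' Hf Hf'.
have HaB : inB G0 a.
  by move: (Hf) => /factE [H1 ->]; apply: (fact_inB abG sG0).
have IH : forall b, gsize b < gsize a -> forall z z',
    factorization G0 b z -> factorization G0 b z' -> chain G0 N b z z'.
  move=> b Hb; apply: IHn; lia.
have Sz : \sum_(x <- z) gsize x = gsize a.
  by move: (Hf) => /factE [_ ->]; rewrite gsize_sumL.
have Sz' : \sum_(x <- z') gsize x = gsize a.
  by move: (Hf') => /factE [_ ->]; rewrite gsize_sumL.
case: (leqP (gsize a) N) => HaN.
  apply: (@ch_step gT G0 N a z z' z' Hf); last exact: ch_refl.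
  apply: leq_trans (d_gr_le _) _; first by rewrite Sz Sz'.
  by rewrite Sz.
case: z Hf Sz => [|u zr] Hf Sz.
  by move: Sz HaN; rewrite big_nil => <-.
case: z' Hf' Sz' => [|v zr'] Hf' Sz'.
  by move: Sz' HaN; rewrite big_nil => <-.
have [Hu Hlu] := fact_atom_le Hf (mem_head _ _).
have [Hv Hlv] := fact_atom_le Hf' (mem_head _ _).
exact: (connect_atoms HaB IH HaN Hu Hv Hlu Hlv (leqnn _) Hf (mem_head _ _) Hf' (mem_head _ _)).
Qed.

Lemma catenary_bound : gr_catenary G0 (2 * dd + 2).
Proof.
move=> a z z' Hf Hf'; exact: chain_ex (cat_chain Hf Hf').
Qed.

End Cat.

Section Zsec.
Variables (gT : finGroupType) (G : {group gT}).
Hypothesis abG : abelian G.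
Implicit Types a b c x y : seqT gT.

Definition mset (s : seq gT) : seqT gT := [ffun g => count_mem g s].

Lemma mset_cons u s : mset (u :: s) = addS (unitS u) (mset s).
Proof. by apply/ffunP => g; rewrite !ffunE /= eq_sym. Qed.

Lemma mset_nil : mset [::] = zeroS gT.
Proof. by apply/ffunP => g; rewrite !ffunE. Qed.

Lemma mset_cat s1 s2 : mset (s1 ++ s2) = addS (mset s1) (mset s2).
Proof. by apply/ffunP => g; rewrite !ffunE count_cat. Qed.

Lemma gsize_mset s : gsize (mset s) = size s.
Proof.
elim: s => [|u s IH]; first by rewrite mset_nil gsize_zero.
by rewrite mset_cons gsize_add gsize_unit IH.
Qed.

Lemma over_unit u : u \in G -> Defs.over G (unitS u).
Proof. by move=> Hu g Hg; rewrite ffunE; case: eqP => // E; move: Hg; rewrite E Hu. Qed.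

Lemma over_mset s : {subset s <= G} -> Defs.over G (mset s).
Proof.
move=> Hs g Hg; rewrite ffunE; apply/count_memPn; apply: contra Hg; exact: Hs.
Qed.

Lemma seqprod_mset s : {subset s <= G} -> seqprod (mset s) = (\prod_(y <- s) y)%g.
Proof.
elim: s => [|u s IH] Hs; first by rewrite mset_nil seqprod_zero big_nil.
have Hu : u \in G by apply: Hs; rewrite mem_head.
have Hs' : {subset s <= G} by move=> y Hy; apply: Hs; rewrite inE Hy orbT.
rewrite mset_cons (seqprod_add abG (over_unit Hu) (over_mset Hs')) seqprod_unit.
by rewrite IH // big_cons.
Qed.

Lemma list_of a : Defs.over G a -> exists s, mset s = a /\ {subset s <= G}.
Proof.
have [n Hn] := ubnP (gsize a); elim: n a Hn => // n IH a Hn Ho.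
case: (classic (is_zero a)) => Hz.
  exists [::]; split => //; apply/ffunP => g; by rewrite !ffunE Hz.
have [g Hg] := not_zero_ex Hz.
have HgG : g \in G by apply: contraLR Hg => /Ho ->.
have Hle : seq_le (unitS g) a by move=> h; rewrite ffunE; case: eqP => // ->.
have Hlt : gsize (subS a (unitS g)) < n.
  move: Hn; rewrite gsize_sub // gsize_unit; have := not_zero_pos Hz; lia.
have Ho' : Defs.over G (subS a (unitS g)) by move=> h Hh; rewrite ffunE Ho.
have [s [Hs1 Hs2]] := IH _ Hlt Ho'.
exists (g :: s); split.
  by rewrite mset_cons Hs1 sub_addK.
by move=> y; rewrite inE => /orP [/eqP -> //| /Hs2].
Qed.

Lemma Zlemma a : Defs.over G a -> #|G| <= gsize a ->
  exists b, [/\ seq_le b a, seqprod b = 1%g & ~ is_zero b].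
Proof.
move=> Ho Hs.
have [s [Es Hs2]] := list_of Ho.
have Hsz : #|G| <= size s by rewrite -gsize_mset Es.
pose p k := (\prod_(y <- take k s) y)%g.
pose r := map p (iota 0 #|G|.+1).
have Hnu : ~~ uniq r.
  apply/negP => Hu.
  have Hsub : {subset r <= enum G}.
    move=> y /mapP [k _ ->]; rewrite mem_enum /p big_seq.
    by apply: group_prod => i /mem_take /Hs2.
  by have := uniq_leq_size Hu Hsub; rewrite size_map size_iota -cardE ltnn.
have /(uniqPn 1%g) [i [j [Hij Hj Heq]]] := Hnu.
have Hj' : j <= #|G| by move: Hj; rewrite size_map size_iota.
have Hi' : i < #|G|.+1 by lia.
rewrite !(nth_map 0) ?size_iota // !nth_iota // !add0n in Heq.
set mid := drop i (take j s).
have Ej : take j s = take i s ++ mid.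
  by rewrite -{1}(cat_take_drop i (take j s)) take_takel // ltnW.
have Es2 : s = take i s ++ (mid ++ drop j s) by rewrite catA -Ej cat_take_drop.
have Hmid : {subset mid <= G} by move=> y /mem_drop /mem_take /Hs2.
exists (mset mid); split.
- move=> g; rewrite -Es !ffunE.
  have -> : count_mem g s = count_mem g (take i s) + (count_mem g mid + count_mem g (drop j s)).
    by rewrite {1}Es2 !count_cat.
  by rewrite addnCA leq_addr.
- rewrite seqprod_mset //; apply: (mulgI (p i)); rewrite mulg1 {2}Heq /p Ej big_cat.
  by [].
- move=> /gsize0P; rewrite gsize_mset /mid size_drop size_takel; last lia.
  lia.
Qed.

Lemma zs_bound (S : {set gT}) a : S \subset G -> zs_free S a -> gsize a < #|G|.
Proof.
move=> HS [Ho Hf]; rewrite ltnNge; apply/negP => Hs.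
have HoG : Defs.over G a by apply: (overG HS).
have [b [Hb Pb Hz]] := Zlemma HoG Hs.
by apply: Hz; apply: Hf.
Qed.

Lemma atom_bound (S : {set gT}) x : S \subset G -> atomB S x -> gsize x <= #|G|.
Proof.
move=> HS Hx; have [g Hg] := not_zero_ex (atom_nz Hx).
have Hf := atom_minus abG HS Hx Hg.
have Hle : seq_le (unitS g) x by move=> h; rewrite ffunE; case: eqP => // ->.
have := zs_bound HS Hf; rewrite (gsize_sub Hle) gsize_unit.
have := not_zero_pos (atom_nz Hx); lia.
Qed.

End Zsec.

Lemma ex_min (P : nat -> Prop) n : P n -> exists m, P m /\ forall k, P k -> m <= k.
Proof.
have [b Hb] := ubnP n; elim: b n Hb => // b IH n Hn Pn.
case: (classic (exists k, k < n /\ P k)) => [[k [Hk Pk]] | Hno].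
  by apply: (IH k) => //; lia.
exists n; split => // k Pk; rewrite leqNgt; apply/negP => Hk; apply: Hno; by exists k.
Qed.

Lemma ex_max (P : nat -> Prop) B n : P n -> (forall m, P m -> m <= B) ->
  exists m, P m /\ forall k, P k -> k <= m.
Proof.
move=> Pn; elim: B => [|B IH] HB.
  by exists n; split => // k /HB; lia.
case: (classic (P B.+1)) => HPB; first by exists B.+1; split.
apply: IH => m Pm; have := HB m Pm; rewrite leq_eqVlt => /orP [/eqP E|//].
by rewrite E in Pm.
Qed.

Section Final.
Variables (gT : finGroupType) (G : {group gT}) (G0 : {set gT}).
Hypothesis abG : abelian G.
Hypothesis sG0 : G0 \subset G.

Lemma unit1_atom : atomB G (unitS (1%g : gT)).
Proof.
split; [split|split].
- exact: over_unit (group1 G).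
- exact: seqprod_unit.
- by move=> H; have := H 1%g; rewrite ffunE eqxx.
- move=> b c _ _ H.
  case: (posnP (b 1%g)) => Hb.
    left => g; have := H g; rewrite ffunE; case: eqP => [->|_] //; lia.
  right => g; have := H g; rewrite ffunE; case: eqP => [->|_]; lia.
Qed.

Lemma extend_atom a : zs_free G0 a ->
  atomB G (addS a (unitS (seqprod a)^-1)%g).
Proof.
move=> [Ho Hf].
set u := (seqprod a)^-1%g.
have HoG : Defs.over G a := overG sG0 Ho.
have HuG : u \in G by rewrite groupV; apply: seqprod_in.
have HouG := over_unit HuG.
split; [split|split].
- by move=> g Hg; rewrite ffunE HoG // HouG.
- by rewrite (seqprod_add abG HoG HouG) seqprod_unit mulgV.
- by move=> H; have := H u; rewrite !ffunE eqxx addn1.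
- move=> b c [Hbo Pb] [Hco Pc] H.
  case: (leqP (b u) (a u)) => Hbu.
    left; apply: Hf => // g; have := H g; rewrite !ffunE.
    by case: eqP => [->|_] //; lia.
  right; apply: Hf => // g; have := H g; rewrite !ffunE.
  by case: eqP => [->|_]; lia.
Qed.

End Final.

Theorem corollary6p4 (gT : finGroupType) (G : {group gT}) (G0 : {set gT}) :
  abelian G -> G0 \subset G ->
  exists c dd DD : nat,
    [/\ is_cgr G0 c, is_small_d G0 dd & is_davenport (G : {set gT}) DD] /\
    [/\ c <= 2 * dd + 2, 2 * dd + 2 <= 2 * DD & 2 * DD <= 2 * #|G|].
Proof.
move=> abG sG0.
have sGG : (G : {set gT}) \subset G by [].
have [dd [[a0 [Ha0 Sa0]] Hdd]] : exists dd, (exists a, zs_free G0 a /\ gsize a = dd) /\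
    (forall m, (exists a, zs_free G0 a /\ gsize a = m) -> m <= dd).
  apply: (@ex_max _ #|G| 0).
    exists (zeroS gT); split; last exact: gsize_zero.
    by split; [move=> g _; rewrite ffunE | move=> b Hb _ g; apply/eqP; rewrite -leqn0; have := Hb g; rewrite ffunE].
  by move=> m [a [Ha <-]]; apply: ltnW; apply: (zs_bound abG sG0).
have Hd : is_small_d G0 dd.
  split; first by exists a0.
  by move=> a Ha; apply: Hdd; exists a.
have [DD [[x0 [Hx0 Sx0]] HDD]] : exists DD, (exists a, atomB G a /\ gsize a = DD) /\
    (forall m, (exists a, atomB G a /\ gsize a = m) -> m <= DD).
  apply: (@ex_max _ #|G| 1).
    by exists (unitS 1%g); split; [apply: unit1_atom | apply: gsize_unit].
  by move=> m [a [Ha <-]]; apply: (atom_bound abG sGG).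
have HD : is_davenport (G : {set gT}) DD.
  split; first by exists x0.
  by move=> a Ha; apply: HDD; exists a.
have [c [Hc Hcmin]] := ex_min (catenary_bound abG sG0 Hd).
exists c, dd, DD; split; first by split => //; split.
have HdD : dd.+1 <= DD.
  apply: HDD; exists (addS a0 (unitS (seqprod a0)^-1)%g); split.
    exact: (extend_atom abG sG0 Ha0).
  by rewrite gsize_add gsize_unit Sa0 addn1.
have HDG : DD <= #|G| by rewrite -Sx0; apply: (atom_bound abG sGG).
split.
- exact: Hcmin (catenary_bound abG sG0 Hd).
- lia.
- lia.
Qed.
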